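(* For $a,b\in\mathbb{C}$ let $\mathfrak{g}_{a,b}$ be the Lie algebra with basis $\{L_i,W_i: i\in\mathbb{Z}\}$ and brackets $[L_m,L_n]=(m-n)L_{m+n}$, $[W_m,W_n]=0$, $[L_m,W_n]=((m+1)(a-1)-(n+1))W_{m+n}+bW_{m+n+1}$ (so $[W_n,L_m]=-[L_m,W_n]$). Each of the following bilinear products $\circ$ (given on basis elements, for all $m,n\in\mathbb{Z}$) is a compatible left-symmetric algebra structure on the indicated Lie algebra. On $\mathfrak{g}_{a,b}$ for all $a,b\in\mathbb{C}$: (1) $L_m\circ L_n=cL_{m+n+1}-(n+1)L_{m+n}$, $L_m\circ W_n=((a-1)(m+1)-(n+1))W_{m+n}+bW_{m+n+1}$, $W_m\circ L_n=0$, $W_m\circ W_n=0$, where $c\in\mathbb{C}$; (2) $L_m\circ L_n=cL_{m+n+1}-(n+1)L_{m+n}$, $L_m\circ W_n=((a-1)(m+1)-(n+1))W_{m+n}+(b+c)W_{m+n+1}$, $W_m\circ L_n=cW_{m+n+1}$, $W_m\circ W_n=0$, where $c\in\mathbb{C}\setminus\{0\}$; (3) $L_m\circ L_n=cL_{m+n+1}-(n+1)L_{m+n}$, $L_m\circ W_n=((a-2)(m+1)-(n+1))W_{m+n}+(b+c)W_{m+n+1}$, $W_m\circ L_n=-(n+1)W_{m+n}+cW_{m+n+1}$, $W_m\circ W_n=0$, where $c\in\mathbb{C}$. On $\mathfrak{g}_{1,b}$ for all $b\in\mathbb{C}$: (4) $L_m\circ L_n=2bL_{m+n+1}-(n+1)L_{m+n}$,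 $L_m\circ W_n=-(n+1)W_{m+n}+bW_{m+n+1}$, $W_m\circ L_n=0$, $W_m\circ W_n=k_1L_{m+n+1}$, where $k_1\neq0$. On $\mathfrak{g}_{1,b}$ with $b\neq0$: (5) $L_m\circ L_n=bL_{m+n+1}-(n+1)L_{m+n}$, $L_m\circ W_n=dL_{m+n+1}-(n+1)W_{m+n}+2bW_{m+n+1}$, $W_m\circ L_n=dL_{m+n+1}+bW_{m+n+1}$, $W_m\circ W_n=-\frac{d^2}{b}L_{m+n+1}-dW_{m+n+1}$, where $d\neq0$. On $\mathfrak{g}_{1,0}$: (6) $L_m\circ L_n=cL_{m+n+1}-(n+1)L_{m+n}$, $L_m\circ W_n=-(n+1)W_{m+n}$, $W_m\circ L_n=0$, $W_m\circ W_n=k_2W_{m+n+1}$, where $c\in\mathbb{C}$, $k_2\in\mathbb{C}\setminus\{0\}$; (7) $L_m\circ L_n=-(n+1)L_{m+n}$, $L_m\circ W_n=-(n+1)W_{m+n}$, $W_m\circ L_n=0$, $W_m\circ W_n=k_1L_{m+n+1}+k_2W_{m+n+1}$, where $k_1,k_2\in\mathbb{C}\setminus\{0\}$; (8) $L_m\circ L_n=cL_{m+n+1}-(n+1)L_{m+n}$, $L_m\circ W_n=h_1L_{m+n+1}-(n+1)W_{m+n}$, $W_m\circ L_n=h_1L_{m+n+1}$, $W_m\circ W_n=\frac{h_1(h_1-k_2)}{c}L_{m+n+1}+k_2W_{m+n+1}$, where $c,h_1\in\mathbb{C}\setminus\{0\}$, $k_2\in\mathbb{C}$; (9) $L_m\circ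 L_n=-(n+1)L_{m+n}$, $L_m\circ W_n=h_1L_{m+n+1}-(n+1)W_{m+n}$, $W_m\circ L_n=h_1L_{m+n+1}$, $W_m\circ W_n=k_1L_{m+n+1}+h_1W_{m+n+1}$, where $h_1,k_1\in\mathbb{C}\setminus\{0\}$; (10) $L_m\circ L_n=cL_{m+n+1}-(n+1)L_{m+n}$, $L_m\circ W_n=cW_{m+n+1}-(n+1)W_{m+n}$, $W_m\circ L_n=cW_{m+n+1}$, $W_m\circ W_n=k_1L_{m+n+1}+k_2W_{m+n+1}$, where $c\in\mathbb{C}\setminus\{0\}$, $(k_1,k_2)\in\mathbb{C}^2\setminus\{(0,0)\}$; (11) $L_m\circ L_n=cL_{m+n+1}-(n+1)L_{m+n}$, $L_m\circ W_n=-(m+n+2)W_{m+n}+cW_{m+n+1}$, $W_m\circ L_n=-(n+1)W_{m+n}+cW_{m+n+1}$, $W_m\circ W_n=k_2W_{m+n+1}$, where $c\in\mathbb{C}$, $k_2\in\mathbb{C}\setminus\{0\}$.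
   Context: A left-symmetric algebra is a vector space $A$ with a bilinear product $\circ$ satisfying $(x\circ y)\circ z-x\circ(y\circ z)=(y\circ x)\circ z-y\circ(x\circ z)$ for all $x,y,z\in A$. A compatible left-symmetric algebra structure on a Lie algebra $(\mathfrak{g},[\cdot,\cdot])$ is a left-symmetric product $\circ$ on the vector space $\mathfrak{g}$ such that $x\circ y-y\circ x=[x,y]$ for all $x,y\in\mathfrak{g}$. (The Lie algebra $\mathfrak{g}_{a,b}$ in the claim is the coefficient Lie algebra of the Lie conformal algebra $\mathcal{W}(a,b)$.) *)

(* Defs.v *)
From HB Require Import structures.
From mathcomp Require Import all_boot all_order all_algebra.
From mathcomp Require Import complex.
From mathcomp Require Import Rstruct.
From mathcomp Require Import finmap monalg.

Set Implicit Arguments.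
Unset Strict Implicit.
Unset Printing Implicit Defensive.

Import GRing.Theory.
Local Open Scope ring_scope.

Definition C : fieldType := Rdefinitions.R[i].

(* Index set of the basis: (false, i) <-> L_i, (true, i) <-> W_i. *)
Definition Idx : choiceType := (bool * int)%type.

Definition V : lmodType C := {malg C[Idx]}.

Definition L (i : int) : V := << (false, i) >>.
Definition W (i : int) : V := << (true, i) >>.

Definition bilin (f : Idx -> Idx -> V) (x y : V) : V :=
  \sum_(k <- msupp x) \sum_(l <- msupp y) (x@_k * y@_l) *: f k l.

Definition mk_table (LL LW WL WW : int -> int -> V) (k l : Idx) : V :=
  match k, l with
  | (false, m), (false, n) => LL m n
  | (false, m), (true, n)  => LW m n
  | (true, m),  (false, n) => WL m n
  | (true, m),  (true, n)  => WW m n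
  end.

Definition mkprod (LL LW WL WW : int -> int -> V) : V -> V -> V :=
  bilin (mk_table LL LW WL WW).

Definition brLW (a b : C) (m n : int) : V :=
  ((m + 1)%:~R * (a - 1) - (n + 1)%:~R) *: W (m + n) + b *: W (m + n + 1).

Definition gbracket (a b : C) : V -> V -> V :=
  mkprod (fun m n => (m - n)%:~R *: L (m + n))
         (fun m n => brLW a b m n)
         (fun n m => - brLW a b m n)
         (fun _ _ => 0).

Definition compatible_LSA (br : V -> V -> V) (prod : V -> V -> V) : Prop :=
  [/\ (forall (x : V) (c : C) (u v : V),
          prod x (c *: u + v) = c *: prod x u + prod x v),
      (forall (y : V) (c : C) (u v : V),
          prod (c *: u + v) y = c *: prod u y + prod v y),
      (forall x y z : V,
          prod (prod x y) z - prod x (prod y z)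
          = prod (prod y x) z - prod y (prod x z))
    & (forall x y : V, prod x y - prod y x = br x y)].

(* Main.v *)
Require Import Defs.
From HB Require Import structures.
From mathcomp Require Import all_boot all_order all_algebra.
From mathcomp Require Import complex.
From mathcomp Require Import Rstruct.
From mathcomp Require Import monalg.
From mathcomp Require Import finmap.
From mathcomp Require Import ring zify.
Import GRing.Theory.
Local Open Scope ring_scope.

Definition linV (g : V -> V) := forall (c : C) (u v : V), g (c *: u + v) = c *: g u + g v.

Lemma linV0 g : linV g -> g 0 = 0.
Proof.
move=> h; have E := h 1 0 0; rewrite !scale1r addr0 in E.
apply: (addIr (g 0)); by rewrite add0r -E.
Qed.

Lemma linVZ g c u : linV g -> g (c *: u) = c *: g u.
Proof. by move=> h; rewrite -[c *: u]addr0 h linV0 // addr0. Qed.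

Lemma linVD g u v : linV g -> g (u + v) = g u + g v.
Proof. by move=> h; have := h 1 u v; rewrite !scale1r. Qed.

Lemma malgUZ (c : C) (k : Idx) : << c *g k >> = c *: (<< k >> : V).
Proof.
apply/malgP => k'; rewrite mcoeffZ !mcoeffU.
by case: (k == k'); rewrite ?mulr1n ?mulr0n ?mulr1 ?mulr0.
Qed.

Lemma linV_basis g : linV g -> (forall k, g << k >> = 0) -> forall x, g x = 0.
Proof.
move=> h hb x; rewrite (monalgE x).
elim: (msupp x : seq _) => [|k s IH]; first by rewrite big_nil linV0.
by rewrite big_cons linVD // malgUZ linVZ // hb IH scaler0 addr0.
Qed.

Lemma linV_sub g1 g2 : linV g1 -> linV g2 -> linV (fun x => g1 x - g2 x).
Proof. by move=> h1 h2 c u v; rewrite h1 h2 scalerBr opprD addrACA. Qed.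

Lemma linV_comp g1 g2 : linV g1 -> linV g2 -> linV (fun x => g1 (g2 x)).
Proof. by move=> h1 h2 c u v; rewrite h2 h1. Qed.

Definition lext (g : Idx -> V) (y : V) : V := \sum_(l <- msupp y) y@_l *: g l.

Lemma lextw g (y : V) (d : {fset Idx}) : (msupp y `<=` d)%fset ->
  lext g y = \sum_(l <- d) y@_l *: g l.
Proof.
move=> le; rewrite /lext [LHS](big_fset_incl _ le) => //= x xd /mcoeff_outdom ->.
by rewrite scale0r.
Qed.

Lemma lext_lin g : linV (lext g).
Proof.
move=> c u v.
set d := (msupp u `|` msupp v `|` msupp (c *: u + v))%fset.
have s1 : (msupp u `<=` d)%fset by exact: fsubset_trans (fsubsetUl _ _) (fsubsetUl _ _).
have s2 : (msupp v `<=` d)%fset by exact: fsubset_trans (fsubsetUr _ _) (fsubsetUl _ _).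
have s3 : (msupp (c *: u + v) `<=` d)%fset by exact: fsubsetUr.
rewrite (lextw _ _ _ s1) (lextw _ _ _ s2) (lextw _ _ _ s3) scaler_sumr -big_split /=.
by apply: eq_bigr => l _; rewrite mcoeffD mcoeffZ scalerDl scalerA.
Qed.

Lemma lextU g k : lext g << k >> = g k.
Proof. by rewrite /lext msuppU oner_eq0 big_seq_fset1 mcoeffUU scale1r. Qed.

Lemma bilin_lext f x y : bilin f x y = lext (fun k => lext (f k) y) x.
Proof.
rewrite /bilin /lext; apply: eq_bigr => k _; rewrite scaler_sumr.
by apply: eq_bigr => l _; rewrite scalerA.
Qed.

Lemma bilin_linl f y : linV (fun x => bilin f x y).
Proof. move=> c u v; rewrite !bilin_lext; exact: lext_lin. Qed.

Lemma lext_ext g1 g2 x : (forall k, g1 k = g2 k) -> lext g1 x = lext g2 x.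
Proof. by move=> h; apply: eq_bigr => k _; rewrite h. Qed.

Lemma lext_add g1 g2 c x :
  lext (fun k => c *: g1 k + g2 k) x = c *: lext g1 x + lext g2 x.
Proof.
rewrite /lext scaler_sumr -big_split /=.
by apply: eq_bigr => k _; rewrite scalerDr !scalerA mulrC.
Qed.

Lemma bilin_linr f x : linV (bilin f x).
Proof.
move=> c u v; rewrite !bilin_lext.
transitivity (lext (fun k => c *: lext (f k) u + lext (f k) v) x).
  by apply: lext_ext => k; exact: lext_lin.
exact: lext_add.
Qed.

Lemma bilinU f k l : bilin f << k >> << l >> = f k l.
Proof. by rewrite bilin_lext !lextU. Qed.

Lemma LS_basis (prod : V -> V -> V) :
  (forall x, linV (prod x)) -> (forall y, linV (fun x => prod x y)) ->
  (forall k l q, prod (prod <<k>> <<l>>) <<q>> - prod <<k>> (prod <<l>> <<q>>)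
     = prod (prod <<l>> <<k>>) <<q>> - prod <<l>> (prod <<k>> <<q>>)) ->
  forall x y z : V, prod (prod x y) z - prod x (prod y z)
          = prod (prod y x) z - prod y (prod x z).
Proof.
move=> Hr Hl Hb.
suff G : forall x y z : V, (prod (prod x y) z - prod x (prod y z))
          - (prod (prod y x) z - prod y (prod x z)) = 0.
  by move=> x y z; apply/eqP; rewrite -subr_eq0 G.
move=> x y z.
move: x; apply: (@linV_basis (fun x => (prod (prod x y) z - prod x (prod y z))
          - (prod (prod y x) z - prod y (prod x z)))).
  apply: (@linV_sub (fun x => prod (prod x y) z - prod x (prod y z))
                    (fun x => prod (prod y x) z - prod y (prod x z))).
    apply: (@linV_sub (fun x => prod (prod x y) z) (fun x => prod x (prod y z))).
      exact: (@linV_comp (fun w => prod w z) (fun x => prod x y)).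
    exact: Hl.
  apply: (@linV_sub (fun x => prod (prod y x) z) (fun x => prod y (prod x z))).
    exact: (@linV_comp (fun w => prod w z) (fun x => prod y x)).
  exact: (@linV_comp (fun w => prod y w) (fun x => prod x z)).
move=> k; move: y; apply: (@linV_basis (fun y => (prod (prod <<k>> y) z - prod <<k>> (prod y z))
          - (prod (prod y <<k>>) z - prod y (prod <<k>> z)))).
  apply: (@linV_sub (fun y => prod (prod <<k>> y) z - prod <<k>> (prod y z))
                    (fun y => prod (prod y <<k>>) z - prod y (prod <<k>> z))).
    apply: (@linV_sub (fun y => prod (prod <<k>> y) z) (fun y => prod <<k>> (prod y z))).
      exact: (@linV_comp (fun w => prod w z) (fun y => prod <<k>> y)).
    exact: (@linV_comp (fun w => prod <<k>> w) (fun y => prod y z)).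
  apply: (@linV_sub (fun y => prod (prod y <<k>>) z) (fun y => prod y (prod <<k>> z))).
    exact: (@linV_comp (fun w => prod w z) (fun y => prod y <<k>>)).
  exact: Hl.
move=> l; move: z; apply: (@linV_basis (fun z => (prod (prod <<k>> <<l>>) z - prod <<k>> (prod <<l>> z))
          - (prod (prod <<l>> <<k>>) z - prod <<l>> (prod <<k>> z)))).
  apply: (@linV_sub (fun z => prod (prod <<k>> <<l>>) z - prod <<k>> (prod <<l>> z))
                    (fun z => prod (prod <<l>> <<k>>) z - prod <<l>> (prod <<k>> z))).
    apply: (@linV_sub (fun z => prod (prod <<k>> <<l>>) z) (fun z => prod <<k>> (prod <<l>> z))).
      exact: Hr.
    exact: (@linV_comp (fun w => prod <<k>> w) (fun z => prod <<l>> z)).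
  apply: (@linV_sub (fun z => prod (prod <<l>> <<k>>) z) (fun z => prod <<l>> (prod <<k>> z))).
    exact: Hr.
  exact: (@linV_comp (fun w => prod <<l>> w) (fun z => prod <<k>> z)).
by move=> q; rewrite Hb subrr.
Qed.

Lemma comm_basis (prod br : V -> V -> V) :
  (forall x, linV (prod x)) -> (forall y, linV (fun x => prod x y)) ->
  (forall x, linV (br x)) -> (forall y, linV (fun x => br x y)) ->
  (forall k l, prod <<k>> <<l>> - prod <<l>> <<k>> = br <<k>> <<l>>) ->
  forall x y : V, prod x y - prod y x = br x y.
Proof.
move=> Hr Hl Br Bl Hb.
suff G : forall x y : V, (prod x y - prod y x) - br x y = 0.
  by move=> x y; apply/eqP; rewrite -subr_eq0 G.
move=> x y; move: x; apply: (@linV_basis (fun x => (prod x y - prod y x) - br x y)).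
  apply: (@linV_sub (fun x => prod x y - prod y x) (fun x => br x y)) => //.
  exact: (@linV_sub (fun x => prod x y) (fun x => prod y x)).
move=> k; move: y; apply: (@linV_basis (fun y => (prod <<k>> y - prod y <<k>>) - br <<k>> y)).
  apply: (@linV_sub (fun y => prod <<k>> y - prod y <<k>>) (fun y => br <<k>> y)) => //.
  exact: (@linV_sub (fun y => prod <<k>> y) (fun y => prod y <<k>>)).
by move=> l; rewrite Hb subrr.
Qed.

Lemma Lo_ex : {f : int -> V | L = f}. Proof. by exists L. Qed.
Lemma Wo_ex : {f : int -> V | W = f}. Proof. by exists W. Qed.
Lemma Mo_ex : {f | mkprod = f}. Proof. by exists mkprod. Qed.
Definition Lo := proj1_sig Lo_ex.
Definition Wo := proj1_sig Wo_ex.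
Definition Mo := proj1_sig Mo_ex.
Lemma ELo : L = Lo. Proof. exact: proj2_sig Lo_ex. Qed.
Lemma EWo : W = Wo. Proof. exact: proj2_sig Wo_ex. Qed.
Lemma EMo : mkprod = Mo. Proof. exact: proj2_sig Mo_ex. Qed.

Section MK.
Variables (LL LW WL WW : int -> int -> V).
Local Notation P := (Mo LL LW WL WW).
Lemma mkprod_linr x : linV (P x). Proof. rewrite -EMo; exact: bilin_linr. Qed.
Lemma mkprod_linl y : linV (fun x => P x y). Proof. rewrite -EMo; exact: bilin_linl. Qed.
Lemma mkprodDl u v y : P (u + v) y = P u y + P v y. Proof. exact: (linVD _ _ _ (mkprod_linl y)). Qed.
Lemma mkprodDr u v y : P y (u + v) = P y u + P y v. Proof. exact: (linVD _ _ _ (mkprod_linr y)). Qed.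
Lemma mkprodZl c u y : P (c *: u) y = c *: P u y. Proof. exact: (linVZ _ _ _ (mkprod_linl y)). Qed.
Lemma mkprodZr c u y : P y (c *: u) = c *: P y u. Proof. exact: (linVZ _ _ _ (mkprod_linr y)). Qed.
Lemma mkprodNl u y : P (- u) y = - P u y.
Proof. by rewrite -scaleN1r mkprodZl scaleN1r. Qed.
Lemma mkprodNr u y : P y (- u) = - P y u.
Proof. by rewrite -scaleN1r mkprodZr scaleN1r. Qed.
Lemma mkprod0l y : P 0 y = 0. Proof. exact: (linV0 _ (mkprod_linl y)). Qed.
Lemma mkprod0r y : P y 0 = 0. Proof. exact: (linV0 _ (mkprod_linr y)). Qed.
Lemma mkprodLL m n : P (Lo m) (Lo n) = LL m n. Proof. rewrite -EMo -ELo; exact: bilinU. Qed.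
Lemma mkprodLW m n : P (Lo m) (Wo n) = LW m n. Proof. rewrite -EMo -ELo -EWo; exact: bilinU. Qed.
Lemma mkprodWL m n : P (Wo m) (Lo n) = WL m n. Proof. rewrite -EMo -ELo -EWo; exact: bilinU. Qed.
Lemma mkprodWW m n : P (Wo m) (Wo n) = WW m n. Proof. rewrite -EMo -EWo; exact: bilinU. Qed.
End MK.

Lemma mcD (x y : V) k : (x + y)@_k = x@_k + y@_k. Proof. exact: mcoeffD. Qed.
Lemma mcN (x : V) k : (- x)@_k = - x@_k. Proof. exact: mcoeffN. Qed.
Lemma mcZ (c : C) (x : V) k : (c *: x)@_k = c * x@_k. Proof. exact: mcoeffZ. Qed.
Lemma mc0 k : (0 : V)@_k = 0. Proof. exact: mcoeff0. Qed.
Lemma mcoeffLo X t j : (Lo X)@_(t, j) = ((~~ t) && (X == j))%:R.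
Proof. by rewrite -ELo /L mcoeffU xpair_eqE; case: t. Qed.
Lemma mcoeffWo X t j : (Wo X)@_(t, j) = (t && (X == j))%:R.
Proof. by rewrite -EWo /W mcoeffU xpair_eqE; case: t. Qed.

Lemma i01 : (0 == 1 :> int) = false. Proof. by []. Qed.
Lemma i02 : (0 == 2 :> int) = false. Proof. by []. Qed.
Lemma i10 : (1 == 0 :> int) = false. Proof. by []. Qed.
Lemma i12 : (1 == 2 :> int) = false. Proof. by []. Qed.
Lemma i20 : (2 == 0 :> int) = false. Proof. by []. Qed.
Lemma i21 : (2 == 1 :> int) = false. Proof. by []. Qed.
Lemma nT : (~~ true) = false. Proof. by []. Qed.
Lemma nF : (~~ false) = true. Proof. by []. Qed.
Lemma bT : ((true : nat)%:R : C) = 1. Proof. by []. Qed.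
Lemma bF : ((false : nat)%:R : C) = 0. Proof. by []. Qed.

Ltac normb s e := repeat match goal with
 | |- context [(?X == s + e)] =>
    first [ have -> : (X == s + e) = (e == 0) by apply/eqP/eqP; lia
          | have -> : (X == s + e) = (e == 1) by apply/eqP/eqP; lia
          | have -> : (X == s + e) = (e == 2) by apply/eqP/eqP; lia ]
 end.

Ltac finish s j t :=
  let e := fresh "e" in
  (have [e He] : exists e, j = s + e by exists (j - s); lia);
  subst j;
  normb s e;
  (have [?|?] := eqVneq e 0; [subst e|have [?|?] := eqVneq e 1; [subst e|have [?|?] := eqVneq e 2; [subst e|]]]);
  rewrite ?eqxx ?i01 ?i02 ?i10 ?i12 ?i20 ?i21;
  repeat match goal with H : is_true (?e != ?d) |- context [?e == ?d] => rewrite (negbTE H) end;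
  case: t; rewrite ?nT ?nF ?andbT ?andbF ?andTb ?andFb ?bT ?bF; first [ring | (field; done)].


Lemma VP (x y : V) : (forall k, x@_k = y@_k) -> x = y.
Proof. by move=> h; apply/malgP. Qed.

Lemma LE m : <<(false,m)>> = L m :> V. Proof. by []. Qed.
Lemma WE m : <<(true,m)>> = W m :> V. Proof. by []. Qed.

Ltac expandP := repeat first [ erewrite mkprod0l | erewrite mkprod0r | erewrite mkprodLL
  | erewrite mkprodLW | erewrite mkprodWL | erewrite mkprodWW | erewrite mkprodDl | erewrite mkprodDr
  | erewrite mkprodZl | erewrite mkprodZr | erewrite mkprodNl | erewrite mkprodNr ].

Ltac coeffs := repeat first [erewrite mcD | erewrite mcN | erewrite mcZ | erewrite mc0
  | erewrite mcoeffLo | erewrite mcoeffWo].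

Ltac toO := repeat first [erewrite LE | erewrite WE];
  try rewrite /gbracket /brLW; try rewrite ELo; try rewrite EWo; rewrite EMo.

Ltac doLS := let t1 := fresh "t1" in let t2 := fresh "t2" in let t3 := fresh "t3" in
  let m := fresh "m" in let n := fresh "n" in let p := fresh "p" in
  let t := fresh "t" in let j := fresh "j" in
  move=> [t1 m] [t2 n] [t3 p]; case: t1; case: t2; case: t3; toO; expandP;
  apply: VP => -[t j]; coeffs; finish (m + n + p) j t.

Ltac doComm := let t1 := fresh "t1" in let t2 := fresh "t2" in
  let m := fresh "m" in let n := fresh "n" in
  let t := fresh "t" in let j := fresh "j" in
  move=> [t1 m] [t2 n]; case: t1; case: t2; toO; expandP;
  apply: VP => -[t j]; coeffs; finish (m + n) j t.

Ltac doall :=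
  split;
  [ move=> x; exact: bilin_linr
  | move=> y; exact: bilin_linl
  | apply: LS_basis; [move=> x; exact: bilin_linr | move=> y; exact: bilin_linl | doLS]
  | apply: comm_basis; [move=> x; exact: bilin_linr | move=> y; exact: bilin_linl
       | move=> x; exact: bilin_linr | move=> y; exact: bilin_linl | doComm]].

Lemma st1 : (forall a b c : C,
     compatible_LSA (gbracket a b)
       (mkprod (fun m n => c *: L (m + n + 1) - (n + 1)%:~R *: L (m + n))
               (fun m n => ((a - 1) * (m + 1)%:~R - (n + 1)%:~R) *: W (m + n)
                           + b *: W (m + n + 1))
               (fun m n => 0)
               (fun m n => 0))).
Proof. move=> a b c. doall. Qed.

Lemma st2 : (forall a b c : C, c != 0 ->
     compatible_LSA (gbracket a b)
       (mkprod (fun m n => c *: L (m + n + 1) - (n + 1)%:~R *: L (m + n))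
               (fun m n => ((a - 1) * (m + 1)%:~R - (n + 1)%:~R) *: W (m + n)
                           + (b + c) *: W (m + n + 1))
               (fun m n => c *: W (m + n + 1))
               (fun m n => 0))).
Proof. move=> a b c hc. doall. Qed.

Lemma st3 : (forall a b c : C,
     compatible_LSA (gbracket a b)
       (mkprod (fun m n => c *: L (m + n + 1) - (n + 1)%:~R *: L (m + n))
               (fun m n => ((a - 2) * (m + 1)%:~R - (n + 1)%:~R) *: W (m + n)
                           + (b + c) *: W (m + n + 1))
               (fun m n => - (n + 1)%:~R *: W (m + n) + c *: W (m + n + 1))
               (fun m n => 0))).
Proof. move=> a b c. doall. Qed.

Lemma st4 : (forall b k1 : C, k1 != 0 ->
     compatible_LSA (gbracket 1 b)
       (mkprod (fun m n => (2 * b) *: L (m + n + 1) - (n + 1)%:~R *: L (m + n))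
               (fun m n => - (n + 1)%:~R *: W (m + n) + b *: W (m + n + 1))
               (fun m n => 0)
               (fun m n => k1 *: L (m + n + 1)))).
Proof. move=> b k1 hk. doall. Qed.

Lemma st5 : (forall b d : C, b != 0 -> d != 0 ->
     compatible_LSA (gbracket 1 b)
       (mkprod (fun m n => b *: L (m + n + 1) - (n + 1)%:~R *: L (m + n))
               (fun m n => d *: L (m + n + 1) - (n + 1)%:~R *: W (m + n)
                           + (2 * b) *: W (m + n + 1))
               (fun m n => d *: L (m + n + 1) + b *: W (m + n + 1))
               (fun m n => - (d ^+ 2 / b) *: L (m + n + 1)
                           - d *: W (m + n + 1)))).
Proof. move=> b d hb hd. doall. Qed.

Lemma st6 : (forall c k2 : C, k2 != 0 ->
     compatible_LSA (gbracket 1 0)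
       (mkprod (fun m n => c *: L (m + n + 1) - (n + 1)%:~R *: L (m + n))
               (fun m n => - (n + 1)%:~R *: W (m + n))
               (fun m n => 0)
               (fun m n => k2 *: W (m + n + 1)))).
Proof. move=> c k2 hk. doall. Qed.

Lemma st7 : (forall k1 k2 : C, k1 != 0 -> k2 != 0 ->
     compatible_LSA (gbracket 1 0)
       (mkprod (fun m n => - (n + 1)%:~R *: L (m + n))
               (fun m n => - (n + 1)%:~R *: W (m + n))
               (fun m n => 0)
               (fun m n => k1 *: L (m + n + 1) + k2 *: W (m + n + 1)))).
Proof. move=> k1 k2 h1 h2. doall. Qed.

Lemma st8 : (forall c h1 k2 : C, c != 0 -> h1 != 0 ->
     compatible_LSA (gbracket 1 0)
       (mkprod (fun m n => c *: L (m + n + 1) - (n + 1)%:~R *: L (m + n))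
               (fun m n => h1 *: L (m + n + 1) - (n + 1)%:~R *: W (m + n))
               (fun m n => h1 *: L (m + n + 1))
               (fun m n => (h1 * (h1 - k2) / c) *: L (m + n + 1)
                           + k2 *: W (m + n + 1)))).
Proof. move=> c h1 k2 hc hh. doall. Qed.

Lemma st9 : (forall h1 k1 : C, h1 != 0 -> k1 != 0 ->
     compatible_LSA (gbracket 1 0)
       (mkprod (fun m n => - (n + 1)%:~R *: L (m + n))
               (fun m n => h1 *: L (m + n + 1) - (n + 1)%:~R *: W (m + n))
               (fun m n => h1 *: L (m + n + 1))
               (fun m n => k1 *: L (m + n + 1) + h1 *: W (m + n + 1)))).
Proof. move=> h1 k1 hh hk. doall. Qed.

Lemma st10 : (forall c k1 k2 : C, c != 0 -> (k1, k2) != (0, 0) ->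
     compatible_LSA (gbracket 1 0)
       (mkprod (fun m n => c *: L (m + n + 1) - (n + 1)%:~R *: L (m + n))
               (fun m n => c *: W (m + n + 1) - (n + 1)%:~R *: W (m + n))
               (fun m n => c *: W (m + n + 1))
               (fun m n => k1 *: L (m + n + 1) + k2 *: W (m + n + 1)))).
Proof. move=> c k1 k2 hc hk. doall. Qed.

Lemma st11 : (forall c k2 : C, k2 != 0 ->
     compatible_LSA (gbracket 1 0)
       (mkprod (fun m n => c *: L (m + n + 1) - (n + 1)%:~R *: L (m + n))
               (fun m n => - (m + n + 2)%:~R *: W (m + n) + c *: W (m + n + 1))
               (fun m n => - (n + 1)%:~R *: W (m + n) + c *: W (m + n + 1))
               (fun m n => k2 *: W (m + n + 1)))).
Proof. move=> c k2 hk. doall. Qed.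

Theorem corollary3p8 :
  (* (1) on g_{a,b}, all a b *)
  (forall a b c : C,
     compatible_LSA (gbracket a b)
       (mkprod (fun m n => c *: L (m + n + 1) - (n + 1)%:~R *: L (m + n))
               (fun m n => ((a - 1) * (m + 1)%:~R - (n + 1)%:~R) *: W (m + n)
                           + b *: W (m + n + 1))
               (fun m n => 0)
               (fun m n => 0))) /\
  (* (2) *)
  (forall a b c : C, c != 0 ->
     compatible_LSA (gbracket a b)
       (mkprod (fun m n => c *: L (m + n + 1) - (n + 1)%:~R *: L (m + n))
               (fun m n => ((a - 1) * (m + 1)%:~R - (n + 1)%:~R) *: W (m + n)
                           + (b + c) *: W (m + n + 1))
               (fun m n => c *: W (m + n + 1))
               (fun m n => 0))) /\
  (* (3) *)
  (forall a b c : C,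
     compatible_LSA (gbracket a b)
       (mkprod (fun m n => c *: L (m + n + 1) - (n + 1)%:~R *: L (m + n))
               (fun m n => ((a - 2) * (m + 1)%:~R - (n + 1)%:~R) *: W (m + n)
                           + (b + c) *: W (m + n + 1))
               (fun m n => - (n + 1)%:~R *: W (m + n) + c *: W (m + n + 1))
               (fun m n => 0))) /\
  (* (4) on g_{1,b}, all b *)
  (forall b k1 : C, k1 != 0 ->
     compatible_LSA (gbracket 1 b)
       (mkprod (fun m n => (2 * b) *: L (m + n + 1) - (n + 1)%:~R *: L (m + n))
               (fun m n => - (n + 1)%:~R *: W (m + n) + b *: W (m + n + 1))
               (fun m n => 0)
               (fun m n => k1 *: L (m + n + 1)))) /\
  (* (5) on g_{1,b}, b <> 0 *)
  (forall b d : C, b != 0 -> d != 0 ->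
     compatible_LSA (gbracket 1 b)
       (mkprod (fun m n => b *: L (m + n + 1) - (n + 1)%:~R *: L (m + n))
               (fun m n => d *: L (m + n + 1) - (n + 1)%:~R *: W (m + n)
                           + (2 * b) *: W (m + n + 1))
               (fun m n => d *: L (m + n + 1) + b *: W (m + n + 1))
               (fun m n => - (d ^+ 2 / b) *: L (m + n + 1)
                           - d *: W (m + n + 1)))) /\
  (* (6) on g_{1,0} *)
  (forall c k2 : C, k2 != 0 ->
     compatible_LSA (gbracket 1 0)
       (mkprod (fun m n => c *: L (m + n + 1) - (n + 1)%:~R *: L (m + n))
               (fun m n => - (n + 1)%:~R *: W (m + n))
               (fun m n => 0)
               (fun m n => k2 *: W (m + n + 1)))) /\
  (* (7) *)
  (forall k1 k2 : C, k1 != 0 -> k2 != 0 ->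
     compatible_LSA (gbracket 1 0)
       (mkprod (fun m n => - (n + 1)%:~R *: L (m + n))
               (fun m n => - (n + 1)%:~R *: W (m + n))
               (fun m n => 0)
               (fun m n => k1 *: L (m + n + 1) + k2 *: W (m + n + 1)))) /\
  (* (8) *)
  (forall c h1 k2 : C, c != 0 -> h1 != 0 ->
     compatible_LSA (gbracket 1 0)
       (mkprod (fun m n => c *: L (m + n + 1) - (n + 1)%:~R *: L (m + n))
               (fun m n => h1 *: L (m + n + 1) - (n + 1)%:~R *: W (m + n))
               (fun m n => h1 *: L (m + n + 1))
               (fun m n => (h1 * (h1 - k2) / c) *: L (m + n + 1)
                           + k2 *: W (m + n + 1)))) /\
  (* (9) *)
  (forall h1 k1 : C, h1 != 0 -> k1 != 0 ->
     compatible_LSA (gbracket 1 0)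
       (mkprod (fun m n => - (n + 1)%:~R *: L (m + n))
               (fun m n => h1 *: L (m + n + 1) - (n + 1)%:~R *: W (m + n))
               (fun m n => h1 *: L (m + n + 1))
               (fun m n => k1 *: L (m + n + 1) + h1 *: W (m + n + 1)))) /\
  (* (10) *)
  (forall c k1 k2 : C, c != 0 -> (k1, k2) != (0, 0) ->
     compatible_LSA (gbracket 1 0)
       (mkprod (fun m n => c *: L (m + n + 1) - (n + 1)%:~R *: L (m + n))
               (fun m n => c *: W (m + n + 1) - (n + 1)%:~R *: W (m + n))
               (fun m n => c *: W (m + n + 1))
               (fun m n => k1 *: L (m + n + 1) + k2 *: W (m + n + 1)))) /\
  (* (11) *)
  (forall c k2 : C, k2 != 0 ->
     compatible_LSA (gbracket 1 0)
       (mkprod (fun m n => c *: L (m + n + 1) - (n + 1)%:~R *: L (m + n))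
               (fun m n => - (m + n + 2)%:~R *: W (m + n) + c *: W (m + n + 1))
               (fun m n => - (n + 1)%:~R *: W (m + n) + c *: W (m + n + 1))
               (fun m n => k2 *: W (m + n + 1)))).
Proof.
split; first exact: st1.
split; first exact: st2.
split; first exact: st3.
split; first exact: st4.
split; first exact: st5.
split; first exact: st6.
split; first exact: st7.
split; first exact: st8.
split; first exact: st9.
split; first exact: st10.
exact: st11.
Qed.
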